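(* Let $K$ be an infinite, algebraically closed, totally ordered quasi-field of characteristic $1$. The natural map from $K\{X_1,\dots,X_n\}$ to the quasi-ring of polynomial functions $K^n\to K$, sending the class of $P$ to $x\mapsto P(x)$, is well defined and is an isomorphism of quasi-rings.
   Context: A quasi-field of characteristic $1$ is a commutative semiring $K$ with $1+1=1$ in which every nonzero element is multiplicatively invertible; ordered by $u\le v$ iff $u+v=v$, totally ordered meaning the order is total. $K$ is algebraically closed if every nonconstant polynomial of $K[X]$ has a root in $K$ (a point where it vanishes or where the maximum of the values of its monomials is attained at least twice). $K\{X_1,\dots,X_n\}$ is the image of $K[X_1,\dots,X_n]$ in its quasi-field of fractions, i.e. the quotient by $P\sim Q$ iff $RP=RQ$ for some nonzero $R$ (rational polynomials). Polynomial functions form a quasi-ring under pointwise addition ($\max$) and multiplication. *)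

(* Defs.v *)
From HB Require Import structures.
From mathcomp Require Import all_boot all_order all_algebra.
Set Implicit Arguments. Unset Strict Implicit. Unset Printing Implicit Defensive.
Import GRing.Theory.
Local Open Scope ring_scope.

Definition quasi_field_char1 (K : comNzSemiRingType) : Prop :=
  (1 + 1 = 1 :> K) /\ (forall x : K, x != 0 -> exists y : K, x * y = 1).

Definition qle (K : comNzSemiRingType) (u v : K) : Prop := u + v = v.
Definition totally_ordered (K : comNzSemiRingType) : Prop :=
  forall u v : K, qle u v \/ qle v u.

Definition infinite_type (K : eqType) : Prop :=
  forall s : seq K, exists x : K, x \notin s.

(* root of a univariate polynomial: it vanishes there, or the maximum
   (= the sum) of the values of its monomials is attained at least twice *)
Definition qroot (K : comNzSemiRingType) (p : {poly K}) (x : K) : Prop :=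
  p.[x] = 0 \/
  exists i j : nat, i <> j /\ p`_i * x ^+ i = p.[x] /\ p`_j * x ^+ j = p.[x].

Definition alg_closed (K : comNzSemiRingType) : Prop :=
  forall p : {poly K}, (1 < size p)%N -> exists x : K, qroot p x.

(* ---------- polynomials in n variables ----------
   A polynomial of K[X_1,...,X_n] is represented by a finite list of
   monomials (c, e) standing for c * X^e, with e : n.-tuple nat the
   exponent vector.  Two lists represent the same formal polynomial iff
   they have the same coefficient function [mcoef]. *)
Definition mpoly (K : comNzSemiRingType) (n : nat) := seq (K * n.-tuple nat).

Section MPoly.
Variables (K : comNzSemiRingType) (n : nat).

Definition mcoef (P : mpoly K n) (e : n.-tuple nat) : K :=
  \sum_(m <- P | m.2 == e) m.1.

Definition mpeq (P Q : mpoly K n) : Prop := forall e, mcoef P e = mcoef Q e.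

Definition mp_nonzero (P : mpoly K n) : Prop := exists e, mcoef P e != 0.

Definition mp0 : mpoly K n := [::].
Definition mp1 : mpoly K n := [:: (1, [tuple of nseq n 0%N])].
Definition mpadd (P Q : mpoly K n) : mpoly K n := P ++ Q.
Definition mpmul (P Q : mpoly K n) : mpoly K n :=
  [seq (m.1 * m'.1, [tuple (tnth m.2 i + tnth m'.2 i)%N | i < n])
  | m : K * n.-tuple nat <- P, m' : K * n.-tuple nat <- Q].

Definition meval (P : mpoly K n) (x : n.-tuple K) : K :=
  \sum_(m <- P) m.1 * \prod_(i < n) tnth x i ^+ tnth m.2 i.

(* P ~ Q iff R P = R Q for some nonzero R: equality of classes in
   K{X_1,...,X_n} *)
Definition rat_equiv (P Q : mpoly K n) : Prop :=
  exists R : mpoly K n, mp_nonzero R /\ mpeq (mpmul R P) (mpmul R Q).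

Definition poly_fun (f : n.-tuple K -> K) : Prop :=
  exists P : mpoly K n, forall x, f x = meval P x.

End MPoly.

(* Main.v *)
Require Import Defs.
From HB Require Import structures.
From mathcomp Require Import all_boot all_order all_algebra.
From Stdlib Require Import ClassicalEpsilon Classical Lia.
Local Open Scope ring_scope.

Module Aux.
Set Implicit Arguments. Unset Strict Implicit. Unset Printing Implicit Defensive.
Import GRing.Theory.

Section Units.
Variable K : comNzSemiRingType.
Definition qinv (x : K) : K := epsilon (inhabits 0) (fun y => x * y = 1).
Lemma qinvP (x : K) : (exists y, x * y = 1) -> x * qinv x = 1.
Proof. move=> h; exact: (epsilon_spec (inhabits 0) (fun y => x * y = 1) h). Qed.
Definition isunit (x : K) := x * qinv x == 1.
Definition GU := {x : K | isunit x}.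
HB.instance Definition _ := [Choice of GU by <:].
Lemma isunitP x : reflect (exists y, x * y = 1) (isunit x).
Proof. apply: (iffP eqP) => [h|h]; [by exists (qinv x)| exact: qinvP]. Qed.
Lemma isunitM x y : isunit x -> isunit y -> isunit (x * y).
Proof.
move=> /isunitP[a ha] /isunitP[b hb]; apply/isunitP; exists (a * b).
by rewrite mulrACA ha hb mulr1.
Qed.
Lemma isunit1 : isunit (1 : K). Proof. by apply/isunitP; exists 1; rewrite mulr1. Qed.
Lemma isunitV x : isunit x -> isunit (qinv x).
Proof. move=> /eqP h; apply/isunitP; exists x; by rewrite mulrC. Qed.
Definition gadd (u v : GU) : GU := exist _ (val u * val v) (isunitM (valP u) (valP v)).
Definition gzero : GU := exist _ 1 isunit1.
Definition gopp (u : GU) : GU := exist _ (qinv (val u)) (isunitV (valP u)).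
Lemma gaddA : associative gadd. Proof. by move=> a b c; apply: val_inj; rewrite /= mulrA. Qed.
Lemma gaddC : commutative gadd. Proof. by move=> a b; apply: val_inj; rewrite /= mulrC. Qed.
Lemma gadd0 : left_id gzero gadd. Proof. by move=> a; apply: val_inj; rewrite /= mul1r. Qed.
Lemma gaddN : left_inverse gzero gopp gadd.
Proof. move=> a; apply: val_inj; rewrite /= mulrC; exact/eqP/(valP a). Qed.
HB.instance Definition _ := GRing.isZmodule.Build GU gaddA gaddC gadd0 gaddN.
Lemma valGD (u v : GU) : val (u + v) = val u * val v. Proof. by []. Qed.
Lemma valG0 : val (0 : GU) = 1. Proof. by []. Qed.
Lemma valGN (u : GU) : val (- u) * val u = 1.
Proof. by rewrite -valGD addNr. Qed.
Lemma valGMn (u : GU) k : val (u *+ k) = val u ^+ k.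
Proof. elim: k => [|k IH]; first by rewrite mulr0n expr0. by rewrite mulrS valGD IH exprS. Qed.
End Units.

Module FMM.
Import Num.Theory Order.TTheory.

Section FM.
Variable G : zmodType.
Variable neg : G -> Prop.
Hypothesis negD : forall a b, neg a -> neg b -> neg (a + b).
Hypothesis neg0 : ~ neg 0.
Hypothesis negT : forall a, a = 0 \/ neg a \/ neg (- a).
Hypothesis negE : exists e, neg e.
Hypothesis divG : forall (g : G) k, (0 < k)%N -> exists h, h *+ k = g.

Definition lt (a b : G) := neg (a - b).

Lemma neg_asym a : neg a -> ~ neg (- a).
Proof. move=> h1 h2; apply: neg0; by rewrite -(addrN a); apply: negD. Qed.

Lemma lt_trans a b c : lt a b -> lt b c -> lt a c.
Proof. rewrite /lt => h1 h2; have := negD h1 h2; by rewrite addrA subrK. Qed.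

Lemma lt_irr a : ~ lt a a.
Proof. by rewrite /lt subrr. Qed.

Lemma lt_asym a b : lt a b -> ~ lt b a.
Proof. rewrite /lt -[b - a]opprB => h; exact: neg_asym. Qed.

Lemma lt_total a b : a = b \/ lt a b \/ lt b a.
Proof.
case: (negT (a - b)) => [/eqP|[h|h]]; [rewrite subr_eq0 => /eqP; by left|by right;left|].
by right; right; rewrite /lt -opprB.
Qed.

Lemma negMn a k : (0 < k)%N -> neg a -> neg (a *+ k).
Proof.
case: k => // k _; elim: k => [|k IH] h; first by rewrite mulr1n.
by rewrite mulrS; apply: negD => //; apply: IH.
Qed.

Lemma negMn_inv a k : (0 < k)%N -> neg (a *+ k) -> neg a.
Proof.
move=> hk h; case: (negT a) => [ea|[//|na]].
  by move: h; rewrite ea mul0rn => /neg0.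
by exfalso; apply: (neg_asym h); rewrite -mulNrn; apply: negMn.
Qed.

Lemma lt_between a b : lt a b -> exists y, lt a y /\ lt y b.
Proof.
move=> h; have [y hy] := divG (a + b) (isT : (0 < 2)%N).
exists y; split; apply: (@negMn_inv _ 2) => //; rewrite mulrnBl hy mulr2n.
  by rewrite opprD addrA addrK.
by rewrite opprD addrA addrK.
Qed.

Lemma below_all (s : seq G) : exists y, forall g, g \in s -> lt y g.
Proof.
elim: s => [|g s [y hy]]; first by exists 0.
have [e he] := negE.
case: (lt_total y g) => [eyg|[lyg|lgy]].
- exists (y + e); move=> z; rewrite inE => /orP[/eqP->|/hy h].
    by rewrite /lt eyg addrC addKr.
  apply: lt_trans h; by rewrite /lt addrC addKr.
- by exists y; move=> z; rewrite inE => /orP[/eqP->|/hy].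
- exists (g + e); move=> z; rewrite inE => /orP[/eqP->|/hy h].
    by rewrite /lt addrC addKr.
  apply: (lt_trans _ (lt_trans lgy h)); by rewrite /lt addrC addKr.
Qed.

Lemma above_all (s : seq G) : exists y, forall g, g \in s -> lt g y.
Proof.
have [y hy] := below_all [seq - g | g <- s].
exists (- y); move=> g hg; have := hy (- g) (map_f _ hg).
rewrite /lt !opprK => h; by rewrite addrC.
Qed.

Definition le a b := a = b \/ lt a b.
Lemma le_lt_trans a b c : le a b -> lt b c -> lt a c.
Proof. by case=> [->//|h1 h2]; apply: lt_trans h2. Qed.
Lemma lt_le_trans a b c : lt a b -> le b c -> lt a c.
Proof. by move=> h1 [<-//|h2]; apply: lt_trans h2. Qed.

Lemma max_exists (s : seq G) : s != [::] -> exists2 m, m \in s & forall g, g \in s -> le g m.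
Proof.
elim: s => [//|g s IH] _.
case: (altP (s =P [::])) => [->|/IH [m hm hs]].
  by exists g; rewrite ?inE // => z; rewrite inE => /eqP->; left.
case: (lt_total g m) => [e|[l|l]].
- exists m; first by rewrite inE hm orbT.
  by move=> z; rewrite inE => /orP[/eqP->|/hs]; [left|].
- exists m; first by rewrite inE hm orbT.
  by move=> z; rewrite inE => /orP[/eqP->|/hs]; [right|].
- exists g; first by rewrite inE eqxx.
  move=> z; rewrite inE => /orP[/eqP->|/hs h]; first by left.
  by right; apply: le_lt_trans h l.
Qed.

Lemma min_exists (s : seq G) : s != [::] -> exists2 m, m \in s & forall g, g \in s -> le m g.
Proof.
move=> hs; have : [seq - g | g <- s] != [::] by case: s hs.
move=> /max_exists [m hm hle]; move/mapP: hm => [g0 hg0 em]; subst m.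
exists g0 => // g hg; case: (hle (- g) (map_f _ hg)) => [/oppr_inj->|h]; first by left.
by right; move: h; rewrite /lt opprK addrC.
Qed.

Lemma sep_exists (Ls Us : seq G) : (forall l u, l \in Ls -> u \in Us -> lt l u) ->
  exists y, (forall l, l \in Ls -> lt l y) /\ (forall u, u \in Us -> lt y u).
Proof.
move=> h.
case: (altP (Ls =P [::])) => [->|hL].
  by have [y hy] := below_all Us; exists y; split.
case: (altP (Us =P [::])) => [->|hU].
  by have [y hy] := above_all Ls; exists y; split.
have [m hm hmL] := max_exists hL; have [M hM hMU] := min_exists hU.
have [y [h1 h2]] := lt_between (h _ _ hm hM).
exists y; split => [l hl|u hu]; [exact: le_lt_trans (hmL _ hl) h1|exact: lt_le_trans h2 (hMU _ hu)].
Qed.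


Variable B : nat.
Definition cstr := (G * {ffun 'I_B -> int})%type.
Definition valc (x : 'I_B -> G) (c : cstr) : G := c.1 + \sum_(i < B) x i *~ c.2 i.

Definition cert (L : seq cstr) :=
  exists cs : seq cstr, cs != [::] /\ {subset cs <= L} /\
    (forall i, \sum_(c <- cs) c.2 i = 0) /\ ~ neg (\sum_(c <- cs) c.1).

Definition gen (L : seq cstr) (w : cstr) :=
  exists cs : seq cstr, cs != [::] /\ {subset cs <= L} /\
    (forall i, \sum_(c <- cs) c.2 i = w.2 i) /\ \sum_(c <- cs) c.1 = w.1.

Lemma gen_cert (L L' : seq cstr) : (forall w, w \in L' -> gen L w) -> cert L' -> cert L.
Proof.
move=> hg [cs' [ne [sub [s1 s2]]]].
suff [cs [hne [hs [h1 h2]]]] : exists cs : seq cstr, (cs' != [::] -> cs != [::]) /\ {subset cs <= L} /\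
    (forall i, \sum_(c <- cs) c.2 i = \sum_(c <- cs') c.2 i) /\
    \sum_(c <- cs) c.1 = \sum_(c <- cs') c.1.
  by exists cs; split; [exact: hne|split=>//; split=> [i|]; rewrite ?h1 ?h2].
elim: cs' sub {ne s1 s2} => [|w cs' IH] sub.
  by exists [::]; split=> //; split=> //.
have [|cs [hne [hs [h1 h2]]]] := IH.
  by move=> z hz; apply: sub; rewrite inE hz orbT.
have [l [lne [ls [l1 l2]]]] := hg w (sub w (mem_head _ _)).
exists (l ++ cs); split; first by destruct l.
split; first by move=> z; rewrite mem_cat => /orP[/ls|/hs].
split; first by move=> i; rewrite big_cat big_cons /= l1 h1.
by rewrite big_cat big_cons /= l2 h2.
Qed.

Lemma sum_nseq (T : Type) (V : nmodType) (F : T -> V) k (a : T) :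
  \sum_(c <- nseq k a) F c = F a *+ k.
Proof. elim: k => [|k IH]; first by rewrite big_nil. by rewrite /= big_cons IH mulrS. Qed.

Lemma valc_sum (x : 'I_B -> G) (c : cstr) : valc x c = c.1 + \sum_(i < B) x i *~ c.2 i.
Proof. by []. Qed.

Lemma valc_upd (x : 'I_B -> G) (j : 'I_B) y (c : cstr) :
  valc (fun i => if i == j then y else x i) c =
  valc (fun i => if i == j then 0 else x i) c + y *~ c.2 j.
Proof.
rewrite /valc -addrA; congr (_ + _).
rewrite [LHS](bigD1 j) //= [X in _ = X + _](bigD1 j) //= !eqxx mul0rz add0r addrC; congr (_ + _).
by apply: eq_bigr => i /negbTE ->.
Qed.

Lemma valc_upd0 (x : 'I_B -> G) (j : 'I_B) (c : cstr) :
  valc x c = valc (fun i => if i == j then 0 else x i) c + x j *~ c.2 j.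
Proof.
rewrite -valc_upd /valc; congr (_ + _); apply: eq_bigr => i _.
by case: eqP => [->|].
Qed.


Lemma mulrzMn (x : G) (z : int) k : x *~ (z *+ k) = x *~ z *+ k.
Proof. elim: k => [|k IH]; first by rewrite !mulr0n mulr0z. by rewrite !mulrS mulrzDr IH. Qed.

Definition dv (g : G) (k : nat) : G := epsilon (inhabits 0) (fun h => h *+ k = g).
Lemma dvP g k : (0 < k)%N -> dv g k *+ k = g.
Proof. move=> hk; exact: (epsilon_spec (inhabits 0) (fun h => h *+ k = g) (divG g hk)). Qed.

Definition scoef (j : 'I_B) (c : cstr) : nat := `|c.2 j|%N.
Definition comb (j : 'I_B) (p q : cstr) : cstr :=
  (p.1 *+ scoef j q + q.1 *+ scoef j p,
   [ffun i => p.2 i *+ scoef j q + q.2 i *+ scoef j p]).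

Lemma comb_j (j : 'I_B) (p q : cstr) : 0 < p.2 j -> q.2 j < 0 -> (comb j p q).2 j = 0.
Proof.
move=> hp hq; rewrite /comb /= ffunE /scoef.
rewrite -[X in X *+ _](gtz0_abs hp) -[X in _ + X *+ _]opprK -(ltz0_abs hq).
by rewrite mulNrn !pmulrn !mulrzz mulrC subrr.
Qed.

Theorem fm_main N : forall L : seq cstr,
  (forall c, c \in L -> forall i : 'I_B, (N <= i)%N -> c.2 i = 0) ->
  (exists x, forall c, c \in L -> neg (valc x c)) \/ cert L.
Proof.
elim: N => [|N IH] L hL.
  case: (classic (forall c, c \in L -> neg c.1)) => [h|h].
    left; exists (fun _ => 0) => c hc.
    rewrite /valc big1 ?addr0; first exact: h.
    by move=> i _; rewrite mul0rz.
  right; have [c hc hn] : exists2 c, c \in L & ~ neg c.1.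
    apply: NNPP => hne; apply: h => c hc; apply: NNPP => hn; apply: hne; by exists c.
  exists [:: c]; split => //; split; first by move=> z; rewrite inE => /eqP->.
  by split=> [i|]; rewrite big_seq1 //; apply: hL.
case: (ltnP N B) => hNB; last first.
  apply: IH => c hc i hi; apply: hL => //.
  by have := ltn_ord i; rewrite ltnNge (leq_trans hNB hi).
set j := Ordinal hNB.
set P := [seq c <- L | 0 < (c : cstr).2 j].
set Q := [seq c <- L | (c : cstr).2 j < 0].
set Z := [seq c <- L | (c : cstr).2 j == 0].
set L' := Z ++ [seq comb j p q | p <- P, q <- Q].
have hL' : forall c, c \in L' -> forall i : 'I_B, (N <= i)%N -> c.2 i = 0.
  move=> c hc i hi; move: hc; rewrite mem_cat => /orP[|/allpairsP[[p q] [hp hq ->]]].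
    rewrite /Z mem_filter => /andP[/eqP h0 hc].
    case: (altP (i =P j)) => [->//|ne]; apply: hL => //.
    by rewrite ltn_neqAle hi andbT; apply: contra ne => /eqP h; apply/eqP/val_inj.
  move: hp hq; rewrite /P /Q !mem_filter /= => /andP[hp0 hp] /andP[hq0 hq].
  case: (altP (i =P j)) => [->|ne]; first exact: comb_j.
  have hNi : (N < i)%N by rewrite ltn_neqAle hi andbT; apply: contra ne => /eqP h; apply/eqP/val_inj.
  by rewrite /comb /= ffunE (hL p hp i hNi) (hL q hq i hNi) !mul0rn addr0.
case: (IH L' hL') => [[x' hx']|hc]; last first.
  right; apply: gen_cert hc => w; rewrite mem_cat => /orP[hz|/allpairsP[[p q] [hp hq ->]]].
    exists [:: w]; split => //; split; last by split=> [i|]; rewrite big_seq1.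
    by move=> z; rewrite inE => /eqP->; move: hz; rewrite /Z mem_filter => /andP[].
  move: hp hq; rewrite /P /Q !mem_filter /= => /andP[hp0 hp] /andP[hq0 hq].
  exists (nseq (scoef j q) p ++ nseq (scoef j p) q); split.
    by rewrite /scoef; case: `|q.2 j|%N (absz_gt0 (q.2 j)) => //; rewrite (ltr0_neq0 hq0).
  split; first by move=> z; rewrite mem_cat => /orP[] /nseqP [-> _].
  split; first by move=> i; rewrite big_cat !sum_nseq /comb /= ffunE.
  by rewrite big_cat !sum_nseq.
left.
set x0 := fun i => if i == j then 0 else x' i.
set W := fun c : cstr => valc x0 c.
have hsp : forall p, p \in P -> (0 < scoef j p)%N /\ p.2 j = (scoef j p)%:Z.
  move=> p; rewrite mem_filter => /andP[h _]; rewrite /scoef absz_gt0 (lt0r_neq0 h).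
  by rewrite (gtz0_abs h).
have hsq : forall q, q \in Q -> (0 < scoef j q)%N /\ q.2 j = - (scoef j q)%:Z.
  move=> q; rewrite mem_filter => /andP[h _]; rewrite /scoef absz_gt0 (ltr0_neq0 h).
  by rewrite (ltz0_abs h) opprK.
have hW0 : forall c : cstr, c.2 j = 0 -> valc x' c = W c.
  by move=> c h; rewrite (valc_upd0 _ j) h mulr0z addr0.
have hWc : forall p q : cstr, W (comb j p q) = W p *+ scoef j q + W q *+ scoef j p.
  move=> p q; rewrite /W /valc /=.
  rewrite (eq_bigr (fun i => (x0 i *~ p.2 i) *+ scoef j q + (x0 i *~ q.2 i) *+ scoef j p)); last first.
    by move=> i _; rewrite ffunE mulrzDr !mulrzMn.
  by rewrite big_split /= !mulrnDl !sumrMnl addrACA.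
set u := fun p : cstr => dv (- W p) (scoef j p).
set l := fun q : cstr => dv (W q) (scoef j q).
have [y [hly hyu]] : exists y, (forall z, z \in [seq l q | q <- Q] -> lt z y) /\
                               (forall z, z \in [seq u p | p <- P] -> lt y z).
  apply: sep_exists => z1 z2 /mapP [q hq ->] /mapP [p hp ->].
  have [sq0 _] := hsq q hq; have [sp0 _] := hsp p hp.
  have hc : comb j p q \in L' by rewrite mem_cat; apply/orP; right; apply/allpairsP; exists (p, q).
  have := hx' _ hc; rewrite hW0; last first.
    apply: comb_j; [by move: hp; rewrite mem_filter => /andP[]| by move: hq; rewrite mem_filter => /andP[]].
  rewrite hWc -[W p]opprK -(dvP (- W p) sp0) -(dvP (W q) sq0) -/(u p) -/(l q).
  rewrite mulNrn -!mulrnA mulnC => h; apply: (@negMn_inv _ (scoef j q * scoef j p)).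
    by rewrite muln_gt0 sq0 sp0.
  by rewrite mulrnBl addrC.
exists (fun i => if i == j then y else x' i) => c hc.
rewrite valc_upd -/x0 -/(W c).
case: (ltgtP (c.2 j) 0) => hcj.
- have hq : c \in Q by rewrite mem_filter hcj hc.
  have [sq0 e] := hsq c hq; rewrite e mulrNz -pmulrn -(dvP (W c) sq0) -/(l c) -mulrnBl.
  by apply: negMn => //; apply: hly; apply: map_f.
- have hp : c \in P by rewrite mem_filter hcj hc.
  have [sp0 e] := hsp c hp; rewrite e -pmulrn -[W c]opprK -(dvP (- W c) sp0) -/(u c).
  rewrite addrC -mulrnBl; by apply: negMn => //; apply: hyu; apply: map_f.
- rewrite hcj mulr0z addr0 -hW0 //; apply: hx'; by rewrite mem_cat mem_filter hcj eqxx hc.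
Qed.

End FM.

End FMM.
Import FMM.

Section Q.
Variable K : comNzSemiRingType.
Hypothesis hqf : quasi_field_char1 K.
Hypothesis htot : totally_ordered K.

Notation le := (@qle K).
Definition qlt (u v : K) := le u v /\ u <> v.

Lemma addxx (x : K) : x + x = x.
Proof. by rewrite -{1 2}[x]mulr1 -mulrDr hqf.1 mulr1. Qed.
Lemma le_refl (x : K) : le x x. Proof. exact: addxx. Qed.
Lemma le_trans (a b c : K) : le a b -> le b c -> le a c.
Proof. rewrite /qle => h1 h2; by rewrite -h2 addrA h1. Qed.
Lemma le_anti (a b : K) : le a b -> le b a -> a = b.
Proof. rewrite /qle => h1 h2; by rewrite -h1 addrC h2. Qed.
Lemma le0 (a : K) : le 0 a. Proof. by rewrite /qle add0r. Qed.
Lemma le_addl (a b : K) : le a (a + b). Proof. by rewrite /qle addrA addxx. Qed.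
Lemma le_addr (a b : K) : le b (a + b). Proof. by rewrite addrC; apply: le_addl. Qed.
Lemma le_sum (a b c : K) : le a c -> le b c -> le (a + b) c.
Proof. rewrite /qle => h1 h2; by rewrite -addrA h2 h1. Qed.
Lemma le_mul (a b c : K) : le a b -> le (a * c) (b * c).
Proof. rewrite /qle => h; by rewrite -mulrDl h. Qed.
Lemma le_mull (a b c : K) : le a b -> le (c * a) (c * b).
Proof. by rewrite ![c * _]mulrC; apply: le_mul. Qed.
Lemma le_mul2 (a b c d : K) : le a b -> le c d -> le (a * c) (b * d).
Proof. move=> h1 h2; apply: le_trans (le_mul c h1) (le_mull b h2). Qed.
Lemma le_0 (a : K) : le a 0 -> a = 0.
Proof. by rewrite /qle addr0. Qed.
Lemma le_eq (a b : K) : le a b -> a + b = b. Proof. by []. Qed.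
Lemma le_total (a b : K) : le a b \/ le b a. Proof. exact: htot. Qed.

Lemma unitP (x : K) : isunit x = (x != 0).
Proof.
apply/idP/idP => [/isunitP [y hy]|hx].
  apply/eqP => e; move/eqP: hy; by rewrite e mul0r eq_sym oner_eq0.
by apply/isunitP; apply: hqf.2.
Qed.

Lemma mul_neq0 (a b : K) : a != 0 -> b != 0 -> a * b != 0.
Proof. by rewrite -!unitP; apply: isunitM. Qed.

Lemma expr_neq0 (a : K) k : a != 0 -> a ^+ k != 0.
Proof. move=> h; elim: k => [|k IH]; by rewrite ?expr0 ?oner_neq0 // exprS mul_neq0. Qed.

Lemma add_neq0 (a b : K) : a != 0 -> a + b != 0.
Proof. move=> h; apply: contra h => /eqP e; apply/eqP/le_0; rewrite -e; exact: le_addl. Qed.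

Lemma sum_pick (I : Type) (s : seq I) (P : pred I) (F : I -> K) :
  \sum_(i <- s | P i) F i = 0 \/ exists2 i, List.In i s /\ P i & \sum_(i <- s | P i) F i = F i.
Proof.
elim: s => [|a s IH]; first by left; rewrite big_nil.
rewrite big_cons; case: ifP => hP; last first.
  case: IH => [->|[i [hi hp] e]]; [by left|right; exists i => //; split => //; by right].
case: IH => [->|[i [hi hp] ->]]; first by right; exists a; [split=> //; left|rewrite addr0].
case: (le_total (F a) (F i)) => h; right.
  by exists i; [split=> //; right|].
by exists a; [split=> //; left|rewrite addrC].
Qed.

Lemma le_big (I : Type) (s : seq I) (P : pred I) (F : I -> K) T :
  (forall i, List.In i s -> P i -> le (F i) T) -> le (\sum_(i <- s | P i) F i) T.
Proof.
elim: s => [|a s IH] h; first by rewrite big_nil; apply: le0.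
rewrite big_cons; have IH' := IH (fun i hi => h i (or_intror hi)).
case: ifP => hP //; apply: le_sum => //; exact: h (or_introl erefl) hP.
Qed.

Lemma le_term (I : Type) (s : seq I) (P : pred I) (F : I -> K) i :
  List.In i s -> P i -> le (F i) (\sum_(j <- s | P j) F j).
Proof.
elim: s => [//|a s IH] /= [ea|hi] hP; rewrite big_cons.
  by subst a; rewrite hP; apply: le_addl.
case: ifP => _; last exact: IH.
apply: le_trans (IH hi hP) _; exact: le_addr.
Qed.

Lemma lt_le_trans (a b c : K) : qlt a b -> le b c -> qlt a c.
Proof.
move=> [h1 h2] h3; split; first exact: le_trans h3.
by move=> e; subst c; apply: h2; apply: le_anti.
Qed.
Lemma le_lt_trans (a b c : K) : le a b -> qlt b c -> qlt a c.
Proof.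
move=> h1 [h2 h3]; split; first exact: le_trans h2.
by move=> e; subst c; apply: h3; apply: le_anti.
Qed.
Lemma lt_irr (a : K) : ~ qlt a a. Proof. by case. Qed.
Lemma lt_nle (a b : K) : qlt a b -> ~ le b a.
Proof. by case=> h1 h2 h3; apply: h2; apply: le_anti. Qed.
Lemma nle_lt (a b : K) : ~ le b a -> qlt a b.
Proof.
move=> h; case: (le_total a b) => h'; last by [].
by split => // e; subst; apply: h; apply: le_refl.
Qed.

Local Notation G := (GU K).

Definition gneg (g : G) := val g + 1 = 1 /\ val g <> 1.

Lemma valN (g : G) : val (- g) * val g = 1. Proof. exact: valGN. Qed.

Lemma gneg_lt (g h : G) : gneg (g - h) <-> qlt (val g) (val h).
Proof.
rewrite /gneg valGD; have hN := valN h; split.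
  move=> [h1 h2]; split.
    have := congr1 (fun z => z * val h) h1.
    by rewrite mulrDl -mulrA hN mulr1 mul1r.
  by move=> e; apply: h2; rewrite e mulrC.
move=> [h1 h2]; split.
  have := congr1 (fun z => z * val (- h)) h1.
  by rewrite mulrDl [val h * _]mulrC hN.
move=> e; apply: h2.
by rewrite -[val g]mulr1 -hN mulrA e mul1r.
Qed.

Lemma gnegD a b : gneg a -> gneg b -> gneg (a + b).
Proof.
move=> [a1 a2] [b1 b2]; rewrite /gneg valGD.
have hab : le (val a * val b) (val b) by rewrite -{2}[val b]mul1r; apply: le_mul.
split; first exact: le_trans hab b1.
move=> e; apply: b2; apply: le_anti => //; by rewrite -e.
Qed.

Lemma gneg0 : ~ gneg 0. Proof. by case. Qed.

Lemma gnegT a : a = 0 \/ gneg a \/ gneg (- a).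
Proof.
case: (altP (val a =P 1)) => [e|ne].
  by left; apply: val_inj; rewrite e.
right; case: (le_total (val a) 1) => h; first by left; split => //; apply/eqP.
right; split.
  have := congr1 (fun z => z * val (- a)) h.
  by rewrite mulrDl mul1r mulrC valN.
move=> e; apply: (negP ne); apply/eqP.
by rewrite -[val a]mul1r -e valN.
Qed.

Lemma gle (g : G) : g = 0 \/ gneg g -> le (val g) 1.
Proof. by case=> [->|[]] //; apply: le_refl. Qed.

Definition gU (x : K) : G := insubd (0 : G) x.
Lemma gUK (x : K) : x != 0 -> val (gU x) = x.
Proof. by move=> h; rewrite /gU val_insubd unitP h. Qed.

Lemma valG_neq0 (g : G) : val g != 0.
Proof. by rewrite -unitP; apply: valP. Qed.

Lemma valGsum (I : Type) (s : seq I) (F : I -> G) :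
  val (\sum_(i <- s) F i) = \prod_(i <- s) val (F i).
Proof. elim: s => [|a s IH]; by rewrite ?big_nil ?big_cons ?valGD ?IH. Qed.


Hypothesis hinf : infinite_type K.
Hypothesis hac : alg_closed K.

Lemma gnegE : exists e : G, gneg e.
Proof.
have [x hx] := hinf [:: 0; 1].
move: hx; rewrite !inE negb_or => /andP[h0 h1].
have : gU x != 0.
  apply: contra h1 => /eqP e; by rewrite -(gUK h0) e.
move=> /eqP ne; case: (gnegT (gU x)) => [//|[h|h]]; by [exists (gU x)| exists (- gU x)].
Qed.

Lemma divG (g : G) k : (0 < k)%N -> exists h : G, h *+ k = g.
Proof.
move=> hk.
pose p : {poly K} := 'X^k + (val g)%:P.
have hs : size p = k.+1.
  rewrite /p size_polyDl size_polyXn // size_polyC.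
  by case: (val g != 0).
have [x hx] : exists x, qroot p x by apply: hac; rewrite hs ltnS.
have hv : p.[x] = x ^+ k + val g by rewrite /p hornerD hornerXn hornerC.
have hg0 := valG_neq0 g.
have hv0 : p.[x] != 0 by rewrite hv addrC; apply: add_neq0.
have hc : forall i, p`_i = (i == k)%:R + (if i == 0%N then val g else 0).
  by move=> i; rewrite /p coefD coefXn coefC.
have hxk : x ^+ k = val g.
  case: hx => [e|[i [j [hij [hi hj]]]]]; first by move: hv0; rewrite e eqxx.
  have hik : forall i, p`_i * x ^+ i = p.[x] -> i = k \/ i = 0%N.
    move=> i0 h; case: (altP (i0 =P k)) => [|n1]; first by left.
    case: (altP (i0 =P 0%N)) => [|n2]; first by right.
    by move: hv0; rewrite -h hc (negbTE n1) (negbTE n2) add0r mul0r eqxx.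
  have hk0 : k != 0%N by rewrite -lt0n.
  have c0 : p`_0 = val g by rewrite hc eq_sym (negbTE hk0) add0r.
  have ck : p`_k = 1 by rewrite hc eqxx (negbTE hk0) addr0.
  case: (hik _ hi) => ei; case: (hik _ hj) => ej; subst; try by case: hij.
  - by rewrite -[x ^+ k]mul1r -ck hi -hj c0 expr0 mulr1.
  - by rewrite -[x ^+ k]mul1r -ck hj -hi c0 expr0 mulr1.
have hx0 : x != 0.
  apply: contra hg0 => /eqP e; by rewrite -hxk e expr0n (negbTE (lt0n_neq0 hk)).
exists (gU x); apply: val_inj; by rewrite valGMn gUK.
Qed.

End Q.

Section P.
Variable K : comNzSemiRingType.
Variable n : nat.
Implicit Types (P Q R : mpoly K n) (x : n.-tuple K) (e f : n.-tuple nat).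

Definition mon x e : K := \prod_(i < n) tnth x i ^+ tnth e i.
Definition addt e f : n.-tuple nat := [tuple (tnth e i + tnth f i)%N | i < n].

Lemma addtC e f : addt e f = addt f e.
Proof. apply: eq_from_tnth => i; by rewrite !tnth_mktuple addnC. Qed.
Lemma addtA e1 e2 e3 : addt e1 (addt e2 e3) = addt (addt e1 e2) e3.
Proof. apply: eq_from_tnth => i; by rewrite !tnth_mktuple addnA. Qed.

Lemma mon_addt x e f : mon x (addt e f) = mon x e * mon x f.
Proof. rewrite /mon -big_split; apply: eq_bigr => i _; by rewrite tnth_mktuple exprD. Qed.

Lemma mevalE P x : meval P x = \sum_(m <- P) m.1 * mon x m.2. Proof. by []. Qed.

Lemma meval_cat P Q x : meval (mpadd P Q) x = meval P x + meval Q x.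
Proof. by rewrite /meval /mpadd big_cat. Qed.

Lemma meval0 x : meval (mp0 K n) x = 0. Proof. by rewrite /meval big_nil. Qed.

Lemma meval1 x : meval (mp1 K n) x = 1.
Proof.
rewrite /meval /mp1 big_seq1 /= mul1r big1 // => i _.
by rewrite tnth_nseq expr0.
Qed.

Lemma meval_mul P Q x : meval (mpmul P Q) x = meval P x * meval Q x.
Proof.
rewrite /meval /mpmul big_allpairs_dep /= mulr_suml; apply: eq_bigr => m _.
rewrite mulr_sumr; apply: eq_bigr => m' _ /=.
rewrite -/(mon x m.2) -/(mon x m'.2) -/(addt m.2 m'.2).
by rewrite (_ : \prod_(i < n) _ = mon x (addt m.2 m'.2)) // mon_addt mulrACA.
Qed.

Lemma mem_mpmul P Q z : z \in mpmul P Q ->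
  exists m m', [/\ m \in P, m' \in Q & z = (m.1 * m'.1, addt m.2 m'.2)].
Proof. by move/allpairsP => [[m m'] [h1 h2 ->]]; exists m, m'. Qed.

Lemma mpmul_mem P Q m m' : m \in P -> m' \in Q -> (m.1 * m'.1, addt m.2 m'.2) \in mpmul P Q.
Proof. move=> h1 h2; apply/allpairsP; by exists (m, m'). Qed.


Lemma sum_pred1 (T : eqType) (V : nmodType) (S : seq T) (F : T -> V) a :
  uniq S -> a \in S -> \sum_(g <- S) (if a == g then F g else 0) = F a.
Proof.
elim: S => [//|b S IH] /= /andP[hb hu]; rewrite inE big_cons => /orP[/eqP ea|ha].
  subst b; rewrite eqxx big1_seq ?addr0 // => g /andP[_ hg].
  by case: eqP => // e; subst g; rewrite hg in hb.
have -> : (a == b) = false by apply/eqP => e; subst b; rewrite ha in hb.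
by rewrite add0r IH.
Qed.

Lemma meval_S P x (S : seq (n.-tuple nat)) : uniq S -> {subset [seq m.2 | m <- P] <= S} ->
  meval P x = \sum_(f <- S) mcoef P f * mon x f.
Proof.
move=> hu hs; rewrite /mcoef.
rewrite (eq_bigr (fun f => \sum_(m <- P) (if m.2 == f then m.1 * mon x f else 0))); last first.
  by move=> f _; rewrite mulr_suml big_mkcond.
rewrite exchange_big /meval; apply: eq_big_seq => m hm.
rewrite (eq_bigr (fun f => if m.2 == f then m.1 * mon x f else 0)); last first.
  by move=> f _; case: eqP.
rewrite sum_pred1 //; apply: hs; by apply: map_f.
Qed.


Lemma meval_mpeq P Q x : mpeq P Q -> meval P x = meval Q x.
Proof.
move=> h; pose S := undup [seq m.2 | m <- P ++ Q].
rewrite (@meval_S P x S) ?undup_uniq // ?(@meval_S Q x S) ?undup_uniq //.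
- by apply: eq_bigr => f _; rewrite h.
- by move=> f hf; rewrite mem_undup map_cat mem_cat hf orbT.
- by move=> f hf; rewrite mem_undup map_cat mem_cat hf.
Qed.

Hypothesis hqf : quasi_field_char1 K.
Hypothesis htot : totally_ordered K.
Hypothesis hinf : infinite_type K.
Notation le := (@qle K).

Lemma mon_neq0 x e : (forall i, tnth x i != 0) -> mon x e != 0.
Proof.
move=> h; rewrite /mon; apply: (big_ind (fun z : K => z != 0)).
- exact: oner_neq0.
- by move=> a b; apply: mul_neq0.
- by move=> i _; apply: expr_neq0.
Qed.

Lemma le_prod (I : Type) (s : seq I) (P : pred I) (F1 F2 : I -> K) :
  (forall i, le (F1 i) (F2 i)) -> le (\prod_(i <- s | P i) F1 i) (\prod_(i <- s | P i) F2 i).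
Proof.
move=> h; apply: (big_ind2 le); first exact: (le_refl hqf 1).
- by move=> a b c d; apply: le_mul2.
- by move=> i _.
Qed.

Lemma le_exp1 (t : K) k : le t 1 -> le (t ^+ k) 1.
Proof.
move=> h; elim: k => [|k IH]; first by rewrite expr0; exact: (le_refl hqf _).
rewrite exprS -[1]mulr1; exact: le_mul2.
Qed.

Lemma lt_mulr (a b c : K) : c != 0 -> qlt a b -> qlt (a * c) (b * c).
Proof.
move=> hc [h1 h2]; split; first exact: le_mul.
move=> e; apply: h2; have := congr1 (fun z => z * qinv c) e.
have hi : c * qinv c = 1 by apply/eqP; rewrite -/(isunit c) (unitP hqf).
by rewrite -!mulrA hi !mulr1.
Qed.

Lemma small_t (s : seq K) : (forall u, u \in s -> u != 0) ->
  exists t : K, [/\ t != 0, le t 1 & forall u, u \in s -> qlt t u].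
Proof.
move=> hs.
have [y hy] := below_all (@gnegD K) (@gnegT K htot) (gnegE hqf htot hinf)
   (0 :: [seq gU u | u <- s]).
exists (val y); split.
- exact: valG_neq0.
- have := hy 0 (mem_head _ _); rewrite /lt gneg_lt => -[] //.
- move=> u hu; have := hy (gU u); rewrite inE map_f ?orbT // => /(_ isT).
  by rewrite /lt gneg_lt gUK //; apply: hs.
Qed.


Lemma torus_ext P Q :
  (forall x, (forall i, tnth x i != 0) -> meval P x = meval Q x) ->
  forall x, meval P x = meval Q x.
Proof.
move=> h x.
pose zf (m : K * n.-tuple nat) := [forall i, (tnth x i == 0) ==> (tnth m.2 i == 0%N)].
pose y (t : K) : n.-tuple K := [tuple if tnth x i == 0 then t else tnth x i | i < n].
pose z := y 1.
have F1 : forall m t, zf m -> mon (y t) m.2 = mon x m.2.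
  move=> m t /forallP hz; apply: eq_bigr => i _; rewrite tnth_mktuple.
  case: (altP (tnth x i =P 0)) => [e|//]; have := hz i; rewrite e eqxx /= => /eqP ->.
  by rewrite !expr0.
have F2 : forall m, ~~ zf m -> mon x m.2 = 0.
  move=> m /forallPn [i0]; rewrite negb_imply => /andP[/eqP h1 h2].
  by rewrite /mon (bigD1 i0) //= h1 expr0n (negbTE h2) mul0r.
have F3 : forall m t, le t 1 -> ~~ zf m -> le (mon (y t) m.2) (t * mon z m.2).
  move=> m t ht /forallPn [i0]; rewrite negb_imply => /andP[/eqP h1 h2].
  rewrite /mon (bigD1 i0) //= [X in le _ (_ * X)](bigD1 i0) //= !tnth_mktuple h1 eqxx.
  rewrite expr1n mul1r; apply: le_mul2.
    case: (tnth m.2 i0) h2 => // k _; rewrite exprS.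
    have := le_mull t (le_exp1 k ht); by rewrite mulr1.
  apply: le_prod => i; rewrite /z !tnth_mktuple; case: (tnth x i == 0).
    by rewrite expr1n; apply: le_exp1.
  exact: (le_refl hqf _).
pose C (S : mpoly K n) := \sum_(m <- S) m.1 * mon z m.2.
have Split : forall (S : mpoly K n) t, le t 1 ->
    exists E, meval S (y t) = meval S x + E /\ le E (t * C S).
  move=> S t ht; exists (\sum_(m <- S | ~~ zf m) m.1 * mon (y t) m.2); split.
    rewrite /meval (bigID zf) /= [in RHS](bigID zf) /=.
    rewrite [X in _ = _ + X + _]big1 ?addr0; last by move=> m hm; move: (F2 m hm); rewrite /mon => ->; rewrite mulr0.
    by congr (_ + _); apply: eq_bigr => m hm; move: (F1 m t hm); rewrite /mon => ->.
  apply: le_big => m hm hzf.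
  apply: le_trans (_ : le (t * (m.1 * mon z m.2)) _).
    rewrite mulrCA; apply: le_mull; exact: F3.
  apply: le_mull; exact: (le_term hqf (fun m => m.1 * mon z m.2) hm).
have hy0 : forall t, t != 0 -> forall i, tnth (y t) i != 0.
  by move=> t t0 i; rewrite tnth_mktuple; case: (altP (tnth x i =P 0)).
pose C' := C P + C Q + 1.
have hC' : C' != 0 by rewrite /C' addrC; apply: (add_neq0 hqf); exact: oner_neq0.
have hiC : C' * qinv C' = 1 by apply/eqP; rewrite -/(isunit C') (unitP hqf).
have hiC0 : qinv C' != 0.
  apply/eqP => e; move: hiC; rewrite e mulr0 => /eqP; by rewrite eq_sym oner_eq0.
pose s := [seq u * qinv C' | u <- [:: meval P x; meval Q x] & u != 0].
have [t [t0 t1 ts]] : exists t : K, [/\ t != 0, le t 1 & forall u, u \in s -> qlt t u].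
  apply: small_t => v /mapP [u]; rewrite mem_filter => /andP[hu _] ->.
  exact: (mul_neq0 hqf).
have hu : forall u, u \in [:: meval P x; meval Q x] -> u != 0 -> qlt (t * C') u.
  move=> u hu hu0; have hs : u * qinv C' \in s by rewrite /s; apply/mapP; exists u => //; rewrite mem_filter hu0 hu.
  by move: (ts _ hs) => /(lt_mulr hC'); rewrite -mulrA [qinv C' * _]mulrC hiC mulr1.
have [EP [eP lP]] := Split P t t1.
have [EQ [eQ lQ]] := Split Q t t1.
have hCP : le (C P) C' by apply: le_trans (le_addl hqf _ _) (le_addl hqf _ _).
have hCQ : le (C Q) C' by apply: le_trans (le_addr hqf _ _) (le_addl hqf _ _).
have lP' : le EP (t * C') by apply: le_trans lP (le_mull _ hCP).
have lQ' : le EQ (t * C') by apply: le_trans lQ (le_mull _ hCQ).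
have hyeq := h (y t) (hy0 t t0); rewrite eP eQ in hyeq.
have absb : forall u E, u \in [:: meval P x; meval Q x] -> u != 0 -> le E (t * C') -> u + E = u.
  move=> u E hin hu0 hE; rewrite addrC; apply: le_trans hE _; exact: (hu u hin hu0).1.
have inP : meval P x \in [:: meval P x; meval Q x] by rewrite mem_head.
have inQ : meval Q x \in [:: meval P x; meval Q x] by rewrite !inE eqxx orbT.
case: (altP (meval P x =P 0)) => hP0; case: (altP (meval Q x =P 0)) => hQ0.
- by rewrite hP0 hQ0.
- exfalso; move: hyeq; rewrite (absb (meval Q x) EQ) // hP0 add0r => e.
  apply: (lt_irr (a := meval Q x)); rewrite -{1}e; exact: le_lt_trans lP' (hu _ inQ hQ0).
- exfalso; move: hyeq; rewrite (absb (meval P x) EP) // hQ0 add0r => e.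
  apply: (lt_irr (a := meval P x)); rewrite {1}e; exact: le_lt_trans lQ' (hu _ inP hP0).
- by move: hyeq; rewrite (absb (meval P x) EP) // (absb (meval Q x) EQ).
Qed.


Lemma meval_neq0 R x : (forall i, tnth x i != 0) -> mp_nonzero R -> meval R x != 0.
Proof.
move=> hx [e0 he0]; rewrite /mcoef in he0.
case: (sum_pick htot R (fun m => m.2 == e0) (fun m => m.1)) => [h0|[m [hm hme] hs]].
  by rewrite h0 eqxx in he0.
rewrite hs in he0; apply/eqP => h0.
have := le_term hqf (P := xpredT) (fun m => m.1 * mon x m.2) hm isT.
move=> /(le_trans) /(_ (le_refl hqf _)); rewrite -mevalE h0 => /le_0 /eqP.
by apply/negP; apply: (mul_neq0 hqf) => //; apply: mon_neq0.
Qed.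

Lemma fwd P Q : rat_equiv P Q -> forall x, meval P x = meval Q x.
Proof.
move=> [R [hR0 hR]]; apply: torus_ext => x hx.
have := meval_mpeq x hR; rewrite !meval_mul => e.
have hRx := meval_neq0 hx hR0.
have hi : meval R x * qinv (meval R x) = 1 by apply/eqP; rewrite -/(isunit _) (unitP hqf).
have := congr1 (fun z => qinv (meval R x) * z) e.
by rewrite /= !mulrA ![qinv _ * _]mulrC hi !mul1r.
Qed.

End P.

Section Bk.
Variable K : comNzSemiRingType.
Variable n : nat.
Hypothesis hqf : quasi_field_char1 K.
Hypothesis htot : totally_ordered K.
Notation le := (@qle K).
Implicit Types (P Q R S A B : mpoly K n).

Definition absorb R A B := forall r a, r \in R -> a \in A ->
  r.1 * a.1 = 0 \/ exists r' b, [/\ r' \in R, b \in B, addt r'.2 b.2 = addt r.2 a.2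
                                  & le (r.1 * a.1) (r'.1 * b.1)].

Lemma absorb_mulr R S A B : absorb R A B -> absorb (mpmul R S) A B.
Proof.
move=> h rs a /mem_mpmul [r [s [hr hs ->]]] ha /=.
case: (h r a hr ha) => [z|[r' [b [hr' hb he hl]]]].
  by left; rewrite mulrAC z mul0r.
right; exists (r'.1 * s.1, addt r'.2 s.2), b; split => //=.
- exact: mpmul_mem.
- by rewrite -addtA [addt s.2 b.2]addtC addtA he -addtA [addt a.2 s.2]addtC addtA.
- by rewrite mulrAC [r'.1 * s.1 * _]mulrAC; apply: le_mul.
Qed.

Lemma absorb_mull R S A B : absorb R A B -> absorb (mpmul S R) A B.
Proof.
move=> h sr a /mem_mpmul [s [r [hs hr ->]]] ha /=.
case: (h r a hr ha) => [z|[r' [b [hr' hb he hl]]]].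
  by left; rewrite -mulrA z mulr0.
right; exists (s.1 * r'.1, addt s.2 r'.2), b; split => //=.
- exact: mpmul_mem.
- by rewrite -addtA he addtA.
- by rewrite -!mulrA; apply: le_mull.
Qed.

Definition prodR (Rs : seq (mpoly K n)) := foldr (@mpmul K n) (mp1 K n) Rs.

Lemma absorb_prod Rs R A B : R \in Rs -> absorb R A B -> absorb (prodR Rs) A B.
Proof.
elim: Rs => [//|R' Rs IH]; rewrite inE => /orP[/eqP->|h] hR /=.
  exact: absorb_mulr.
apply: absorb_mull; exact: IH.
Qed.

Lemma In_mem (T : eqType) (x : T) s : List.In x s <-> x \in s.
Proof.
elim: s => [//|a s IH] /=; rewrite inE; split.
  by case=> [->|/IH ->]; rewrite ?eqxx ?orbT.
by case/orP=> [/eqP->|/IH]; [left|right].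
Qed.

Lemma absorb_coef R A B : absorb R A B -> forall f, le (mcoef (mpmul R A) f) (mcoef (mpmul R B) f).
Proof.
move=> h f; rewrite /mcoef; apply: le_big => m /In_mem hm /eqP hmf.
move: hm => /mem_mpmul [r [a [hr ha em]]]; subst m.
case: (h r a hr ha) => [/= ->|[r' [b [hr' hb he hl]]]]; first exact: le0.
apply: le_trans hl _.
apply: (le_term hqf (P := fun m => m.2 == f) (fun m => m.1) (i := (r'.1 * b.1, addt r'.2 b.2))).
  by apply/In_mem; apply: mpmul_mem.
by rewrite /= he -hmf.
Qed.

Definition good R := exists2 r, r \in R & r.1 != 0.

Lemma good_mul R S : good R -> good S -> good (mpmul R S).
Proof.
move=> [r hr hr0] [s hs hs0]; exists (r.1 * s.1, addt r.2 s.2); first exact: mpmul_mem.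
exact: (mul_neq0 hqf).
Qed.

Lemma good_prod Rs : (forall R, R \in Rs -> good R) -> good (prodR Rs).
Proof.
elim: Rs => [|R Rs IH] h /=.
  by exists (1, [tuple of nseq n 0%N]); rewrite ?mem_head // oner_neq0.
apply: good_mul; first by apply: h; rewrite mem_head.
by apply: IH => R' hR'; apply: h; rewrite inE hR' orbT.
Qed.

Lemma good_nonzero R : good R -> mp_nonzero R.
Proof.
move=> [r hr hr0]; exists r.2; apply/eqP => e.
have h : le r.1 (mcoef R r.2).
  exact: (le_term hqf (P := fun m => m.2 == r.2) (fun m => m.1) (proj2 (In_mem _ _) hr) (eqxx _)).
by move: h; rewrite e => /le_0 /eqP; apply/negP.
Qed.

Lemma absorb_zero R a B : a.1 = 0 -> absorb R [:: a] B.
Proof. by move=> h r a' hr; rewrite inE => /eqP ->; left; rewrite h mulr0. Qed.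

Lemma absorb_single R A B : (forall a, a \in A -> absorb R [:: a] B) -> absorb R A B.
Proof. by move=> h r a hr ha; apply: (h a ha r a hr); rewrite mem_head. Qed.


Hypothesis hinf : infinite_type K.
Hypothesis hac : alg_closed K.
Local Notation G := (GU K).

Lemma subset_map (T U : eqType) (f : T -> U) (s : seq T) (cs : seq U) :
  {subset cs <= map f s} -> exists ms, {subset ms <= s} /\ map f ms = cs.
Proof.
elim: cs => [|c cs IH] h; first by exists [::].
have [|ms [h1 h2]] := IH; first by move=> z hz; apply: h; rewrite inE hz orbT.
have /mapP [m hm ->] := h c (mem_head _ _).
exists (m :: ms); split; last by rewrite /= h2.
by move=> z; rewrite inE => /orP[/eqP->|/h1].
Qed.

Definition cm (c : K) (e : n.-tuple nat) (m : K * n.-tuple nat) : cstr G n :=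
  (gU m.1 - gU c, [ffun i => (tnth m.2 i)%:Z - (tnth e i)%:Z]).
Definition Xs (x : 'I_n -> G) (f : n.-tuple nat) : G := \sum_(i < n) x i *+ tnth f i.

Lemma valXs x f : val (Xs x f) = mon [tuple val (x i) | i < n] f.
Proof.
rewrite /Xs (big_morph val (@valGD K) (valG0 K)); apply: eq_bigr => i _.
by rewrite valGMn tnth_mktuple.
Qed.

Lemma valc_cm x c e m : valc x (cm c e m) = (gU m.1 + Xs x m.2) - (gU c + Xs x e).
Proof.
rewrite /valc /cm /= /Xs opprD addrACA -sumrB; congr (_ + _).
by apply: eq_bigr => i _; rewrite ffunE mulrzBl_nat -!pmulrn.
Qed.

Lemma trans_lt x c e m : m.1 != 0 -> c != 0 ->
  gneg (valc x (cm c e m)) <->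
  qlt (m.1 * mon [tuple val (x i) | i < n] m.2) (c * mon [tuple val (x i) | i < n] e).
Proof. by move=> h1 h2; rewrite valc_cm gneg_lt !valGD !valXs !(gUK hqf). Qed.

Lemma sumz_nat (I : Type) (s : seq I) (F : I -> nat) :
  \sum_(i <- s) (F i)%:Z = (\sum_(i <- s) F i)%N%:Z.
Proof. elim: s => [|a s IH]; by rewrite ?big_nil ?big_cons ?IH ?PoszD. Qed.

Lemma sum_const_nat (I : Type) (s : seq I) k : (\sum_(i <- s) k)%N = (k * size s)%N.
Proof. elim: s => [|a s IH]; by rewrite ?big_nil ?muln0 ?big_cons ?IH ?mulnS. Qed.


Lemma key P (c : K) (e : n.-tuple nat) : c != 0 ->
  (forall x, (forall i, tnth x i != 0) -> le (c * mon x e) (meval P x)) ->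
  exists R, good R /\ absorb R [:: (c, e)] P.
Proof.
move=> hc hle.
pose Pn := [seq m <- P | m.1 != 0].
have hL : forall w, w \in map (cm c e) Pn -> forall i : 'I_n, (n <= i)%N -> w.2 i = 0.
  by move=> w _ i; rewrite leqNgt ltn_ord.
case: (@fm_main G (@gneg K) (@gnegD K) (@gneg0 K) (@gnegT K htot) (gnegE hqf htot hinf)
          (divG hqf hac) n n _ hL) => [[x hx]|[cs [cs0 [csub [cs1 cs2]]]]].
  exfalso; pose xt := [tuple val (x i) | i < n].
  have hxt : forall i, tnth xt i != 0 by move=> i; rewrite tnth_mktuple valG_neq0.
  have hmon := mul_neq0 hqf hc (mon_neq0 hqf e hxt).
  have := hle xt hxt; rewrite mevalE.
  case: (sum_pick htot P (fun _ => true) (fun m => m.1 * mon xt m.2)) => [->|[m [hm _] ->]].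
    by move=> /le_0 /eqP; apply/negP.
  case: (altP (m.1 =P 0)) => hm0.
    by rewrite hm0 mul0r => /le_0 /eqP; apply/negP.
  apply: lt_nle; apply/(trans_lt x e hm0 hc); apply: hx; apply: map_f.
  by rewrite mem_filter hm0; apply/In_mem.
have [ms [hms ems]] := subset_map csub.
rewrite -ems in cs0 cs1 cs2.
set D := size ms.
have D0 : (0 < D)%N by rewrite /D; destruct ms.
have hmsP : forall m, m \in ms -> m \in P /\ m.1 != 0.
  by move=> m /hms; rewrite mem_filter => /andP[].
have S1 : forall i : 'I_n, (\sum_(m <- ms) tnth m.2 i)%N = (tnth e i * D)%N.
  move=> i; move: (cs1 i); rewrite big_map.
  rewrite (eq_bigr (fun m => (tnth m.2 i)%:Z - (tnth e i)%:Z)); last by move=> m _; rewrite ffunE.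
  by rewrite sumrB !sumz_nat sum_const_nat => /eqP; rewrite subr_eq0 => /eqP [].
have S2 : ~ gneg (\sum_(m <- ms) (gU m.1 - gU c)) by move: cs2; rewrite big_map.
pose mt t := nth (0, e) ms t.
pose b t := val (\sum_(m <- take t ms) (gU c - gU m.1)).
pose g t : n.-tuple nat := [tuple (t * tnth e i + \sum_(m <- drop t ms) tnth m.2 i)%N | i < n].
exists [seq (b t, g t) | t <- iota 0 D]; split.
  exists (b 0%N, g 0%N); first by apply: map_f; rewrite mem_iota.
  by rewrite /b take0 big_nil /=; exact: oner_neq0.
move=> r a /mapP [t ht ->]; rewrite inE => /eqP -> {a}.
move: ht; rewrite mem_iota add0n => /andP[_ htD].
have hm : mt t \in ms by apply: mem_nth.
have [hmP hm0] := hmsP _ hm.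
have hcm : val (gU c - gU (mt t).1) * (mt t).1 = c.
  have e1 := valN (gU (mt t).1); rewrite (gUK hqf hm0) in e1.
  by rewrite valGD -mulrA e1 mulr1 (gUK hqf hc).
right.
case: (ltnP t.+1 D) => hD.
  exists (b t.+1, g t.+1), (mt t); split => //.
  - by apply: map_f; rewrite mem_iota.
  - apply: eq_from_tnth => i; rewrite !tnth_mktuple /= (drop_nth (0, e) htD) big_cons -/(mt t).
    have arith : forall a b c d : nat, (a.+1 * b + c + d = a * b + (d + c) + b)%N.
      by move=> *; rewrite -?plusE -?multE; lia.
    exact: arith.
  - rewrite /b (take_nth (0, e) htD) big_rcons valGD -mulrA -/(mt t). rewrite hcm; exact: (le_refl hqf _).
have eD : t.+1 = D by apply/eqP; rewrite eqn_leq hD htD.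
exists (b 0%N, g 0%N), (mt t); split => //.
- by apply: map_f; rewrite mem_iota.
- apply: eq_from_tnth => i; rewrite !tnth_mktuple /= drop0 S1 (drop_nth (0, e) htD) big_cons -/(mt t).
  have -> : drop t.+1 ms = [::] by rewrite eD drop_size.
  rewrite big_nil -eD.
  have arith : forall a b d : nat, (0 * b + 0 + b * a.+1 + d = a * b + (d + 0) + b)%N.
    by move=> *; rewrite -?plusE -?multE; lia.
  exact: arith.
- set Stot := \sum_(m <- ms) (gU c - gU m.1).
  have hS : val Stot = b t * val (gU c - gU (mt t).1).
    by rewrite /Stot -{1}(take_size ms) -/D -eD (take_nth (0, e) htD) big_rcons valGD.
  have hle1 : le (val Stot) 1.
    apply: (gle hqf); case: (gnegT htot Stot) => [e0|[h|h]]; [by left|by right|].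
    by exfalso; apply: S2; rewrite /Stot -sumrN in h; move: h; congr gneg; apply: eq_bigr => m _; rewrite opprB.
  rewrite /b take0 big_nil /= mul1r -/(b t) -hcm mulrA -hS.
  by have := le_mul (mt t).1 hle1; rewrite mul1r.
Qed.


Lemma absorb_sub R A A' B : absorb R A B -> {subset A' <= A} -> absorb R A' B.
Proof. by move=> h hs r a hr ha; apply: h => //; apply: hs. Qed.

Lemma collect A B : (forall a, a \in A -> a.1 != 0 -> exists R, good R /\ absorb R [:: a] B) ->
  exists Rs, (forall R, R \in Rs -> good R) /\ absorb (prodR Rs) A B.
Proof.
elim: A => [|a A IH] h.
  by exists [::]; split => // r a' _; rewrite in_nil.
have [|Rs [hg ha]] := IH; first by move=> a' ha'; apply: h; rewrite inE ha' orbT.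
case: (altP (a.1 =P 0)) => ha0.
  exists Rs; split => //; apply: absorb_single => a'; rewrite inE => /orP[/eqP->|h'].
    exact: absorb_zero.
  by apply: absorb_sub ha _ => z; rewrite inE => /eqP->.
have [R [hR hRa]] := h a (mem_head _ _) ha0.
exists (R :: Rs); split.
  by move=> R'; rewrite inE => /orP[/eqP->|/hg].
apply: absorb_single => a'; rewrite inE => /orP[/eqP->|h'] /=.
  exact: absorb_mulr.
apply: absorb_mull; by apply: absorb_sub ha _ => z; rewrite inE => /eqP->.
Qed.

Lemma bwd P Q : (forall x, meval P x = meval Q x) -> rat_equiv P Q.
Proof.
move=> h.
have hk : forall P Q : mpoly K n, (forall x, meval P x = meval Q x) ->
    forall a, a \in Q -> a.1 != 0 -> exists R, good R /\ absorb R [:: a] P.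
  move=> P' Q' h' a ha ha0.
  have := @key P' a.1 a.2 ha0; case: a ha ha0 => a1 a2 ha ha0 /=; apply=> x hx.
  rewrite h' mevalE.
  exact: (le_term hqf (P := fun _ => true) (fun m => m.1 * mon x m.2) (i := (a1, a2)) (proj2 (In_mem _ _) ha)).
have [Rs1 [g1 a1]] := collect (hk P Q h).
have [Rs2 [g2 a2]] := collect (hk Q P (fun x => esym (h x))).
exists (mpmul (prodR Rs1) (prodR Rs2)); split.
  by apply: good_nonzero; apply: good_mul; apply: good_prod.
move=> f; apply: le_anti; apply: absorb_coef.
  exact: absorb_mull.
exact: absorb_mulr.
Qed.

End Bk.

End Aux.
Import Aux.

Theorem theorem3p7 (K : comNzSemiRingType) (n : nat)
  (hqf : quasi_field_char1 K) (htot : totally_ordered K)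
  (hinf : infinite_type K) (hac : alg_closed K) :
  (* the map [P] |-> (x |-> P(x)) is well defined on K{X} and injective *)
  (forall P Q : mpoly K n,
      rat_equiv P Q <-> (forall x, meval P x = meval Q x)) /\
  (* it is onto the polynomial functions *)
  (forall f : n.-tuple K -> K, poly_fun f ->
      exists P : mpoly K n, forall x, meval P x = f x) /\
  (* it is a morphism of quasi-rings *)
  (forall x, meval (mp0 K n) x = 0) /\
  (forall x, meval (mp1 K n) x = 1) /\
  (forall (P Q : mpoly K n) x, meval (mpadd P Q) x = meval P x + meval Q x) /\
  (forall (P Q : mpoly K n) x, meval (mpmul P Q) x = meval P x * meval Q x).
Proof.
split.
  move=> P Q; split; [move=> h; exact: (fwd hqf htot hinf h) | move=> h; exact: (bwd hqf htot hinf hac h)].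
split.
  by move=> f [P hP]; exists P => x; rewrite hP.
split; first exact: meval0.
split; first exact: meval1.
split; first exact: meval_cat.
exact: meval_mul.
Qed.
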